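(* Let $\alpha\in\ell^2$ and $\epsilon>0$, and suppose that the $(\epsilon,L)$-sequence associated with $\alpha$ and $\epsilon$ has finite length $N$. Then $a_{2N+2}(R_\alpha)\le\epsilon/\sqrt2$.
   Context: $\mathbb{N}=\{0,1,2,\dots\}$; $\ell^2$ is the space of square-summable functions $\mathbb{N}\to\mathbb{C}$; $(R_\alpha f)(k)=\alpha_k\sum_{j=0}^kf(j)$. Approximation numbers: $a_{n+1}(T)=\inf\{\|T-P\|:P$ linear on $\ell^2$ with rank $\le n\}$, $\|\cdot\|$ the operator norm. For a finite natural interval $I$: $\mu(I)=\sum_{k\in I}|\alpha_k|^2$, $\|f\|_{2,I}=(\sum_{k\in I}|f(k)|^2)^{1/2}$, $l(I,f)=\sum_{k\in I}\sum_{n\in I\setminus\{k\}}|\alpha_k\alpha_n\sum_{j=\min(k,n)+1}^{\max(k,n)}f(j)|^2$, $L(I)=(\sup_{\|f\|_{2,I}\le1}l(I,f)/\mu(I))^{1/2}$ (sup over $f$ supported in $I$; $L(I)=0$ if $\alpha$ vanishes on $I$). $(\epsilon,L)$-sequence: $c_0=0$ and $c_{k+1}=\inf\{t\in\mathbb{N}:t>c_k,\ L([c_k,t-1])>\epsilon\}$ (with $\inf\emptyset=+\infty$). It has finite length $N$ if $c_N<\infty$ and $c_{N+1}=+\infty$. *)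

(* Defs.v *)
From Stdlib Require Import Reals List.
From Coquelicot Require Import Coquelicot.
Import ListNotations.
Open Scope R_scope.

Definition rsum (a b : nat) (g : nat -> R) : R :=
  fold_right Rplus 0 (map g (seq a (S b - a))).
Definition csum (a b : nat) (g : nat -> C) : C :=
  fold_right Cplus (RtoC 0) (map g (seq a (S b - a))).

Definition ell2 (f : nat -> C) : Prop := ex_series (fun k => (Cmod (f k)) ^ 2).
Definition norm2 (f : nat -> C) : R := sqrt (Series (fun k => (Cmod (f k)) ^ 2)).

Definition R_op (alpha : nat -> C) (f : nat -> C) : nat -> C :=
  fun k => Cmult (alpha k) (csum 0 k f).

Definition opnorm (T : (nat -> C) -> (nat -> C)) : Rbar :=
  Lub_Rbar (fun r => exists f, ell2 f /\ norm2 f <= 1 /\ r = norm2 (T f)).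

Definition op_sub (T P : (nat -> C) -> (nat -> C)) : (nat -> C) -> (nat -> C) :=
  fun f k => Cminus (T f k) (P f k).

Definition linear_l2 (P : (nat -> C) -> (nat -> C)) : Prop :=
  (forall f, ell2 f -> ell2 (P f)) /\
  (forall f g, ell2 f -> ell2 g ->
     forall k, P (fun j => Cplus (f j) (g j)) k = Cplus (P f k) (P g k)) /\
  (forall (c : C) f, ell2 f -> forall k, P (fun j => Cmult c (f j)) k = Cmult c (P f k)).

Definition rank_le (P : (nat -> C) -> (nat -> C)) (n : nat) : Prop :=
  exists v : nat -> (nat -> C),
    (forall i, (i < n)%nat -> ell2 (v i)) /\
    forall f, ell2 f -> exists c : nat -> C,
      forall k, P f k = csum 0 (pred n) (fun i => if Nat.ltb i n then Cmult (c i) (v i k) else RtoC 0).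

(* approximation number a_m(T) = inf { ||T - P|| : P linear on l^2, rank P <= m-1 }, m >= 1 *)
Definition approx_num (T : (nat -> C) -> (nat -> C)) (m : nat) : Rbar :=
  Glb_Rbar (fun r => exists P, linear_l2 P /\ rank_le P (pred m) /\
                              opnorm (op_sub T P) = Finite r).

Definition mu (alpha : nat -> C) (a b : nat) : R := rsum a b (fun k => (Cmod (alpha k)) ^ 2).

Definition norm2I (a b : nat) (f : nat -> C) : R := sqrt (rsum a b (fun k => (Cmod (f k)) ^ 2)).

Definition supported_in (a b : nat) (f : nat -> C) : Prop :=
  forall j, (j < a \/ b < j)%nat -> f j = RtoC 0.

Definition l_I (alpha : nat -> C) (a b : nat) (f : nat -> C) : R :=
  rsum a b (fun k => rsum a b (fun n =>
    if Nat.eqb n k then 0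
    else (Cmod (Cmult (Cmult (alpha k) (alpha n))
                      (csum (S (Nat.min k n)) (Nat.max k n) f))) ^ 2)).

(* L(I); the supremum is over a bounded set (finite-dimensional quadratic form), hence finite *)
Definition L_I (alpha : nat -> C) (a b : nat) : R :=
  if Req_EM_T (mu alpha a b) 0 then 0
  else sqrt (real (Lub_Rbar (fun r => exists f, supported_in a b f /\ norm2I a b f <= 1 /\
                                           r = l_I alpha a b f / mu alpha a b))).

(* The (eps,L)-sequence c_0 = 0, c_{k+1} = inf{t > c_k : L([c_k, t-1]) > eps}
   has finite length N : c_0, ..., c_N are finite and c_{N+1} = +oo. *)
Definition epsL_finite_length (alpha : nat -> C) (eps : R) (N : nat) : Prop :=
  exists c : nat -> nat,
    c 0%nat = 0%nat /\
    (forall k, (k < N)%nat ->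
       (c k < c (S k))%nat /\ L_I alpha (c k) (c (S k) - 1) > eps /\
       forall t, (c k < t < c (S k))%nat -> ~ (L_I alpha (c k) (t - 1) > eps)) /\
    (forall t, (c N < t)%nat -> ~ (L_I alpha (c N) (t - 1) > eps)).

(* Main.v *)
Require Import Defs.
From Stdlib Require Import Reals List Lia Lra Psatz Classical Arith.
From Coquelicot Require Import Coquelicot.
Open Scope R_scope.

Definition ssum (u : nat -> R) (a b : nat) : R := sum_n_m u a b.
Lemma fr_iter : forall (l : list nat) (g : nat -> R), fold_right Rplus 0 (map g l) = Iter.iter plus zero l g.
Proof. induction l; intros; simpl; [reflexivity| rewrite IHl; reflexivity]. Qed.
Lemma fr_iterC : forall (l : list nat) (g : nat -> C), fold_right Cplus (RtoC 0) (map g l) = Iter.iter plus zero l g.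
Proof. induction l; intros; simpl; [reflexivity| rewrite IHl; reflexivity]. Qed.
Lemma rsum_sum : forall a b g, rsum a b g = ssum g a b.
Proof. intros. unfold rsum. rewrite fr_iter. reflexivity. Qed.
Lemma csum_sum : forall a b (g:nat->C), csum a b g = sum_n_m g a b.
Proof. intros. unfold csum. rewrite fr_iterC. reflexivity. Qed.

Lemma Re_sum : forall (g : nat -> C) a b, Re (sum_n_m g a b) = ssum (fun k => Re (g k)) a b.
Proof. intros. unfold sum_n_m, Iter.iter_nat. unfold ssum, sum_n_m, Iter.iter_nat. induction (seq.iota a (S b - a)) as [|x l IH]; simpl.
 reflexivity. exact (f_equal (fun t => _ + t) IH). Qed.
Lemma Im_sum : forall (g : nat -> C) a b, Im (sum_n_m g a b) = ssum (fun k => Im (g k)) a b.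
Proof. intros. unfold sum_n_m, Iter.iter_nat. unfold ssum, sum_n_m, Iter.iter_nat. induction (seq.iota a (S b - a)) as [|x l IH]; simpl.
 reflexivity. exact (f_equal (fun t => _ + t) IH). Qed.

Lemma ssum_plus : forall (u v : nat -> R) a b, ssum (fun k => u k + v k) a b = ssum u a b + ssum v a b.
Proof. intros. unfold ssum. exact (sum_n_m_plus u v a b). Qed.
Lemma ssum_scal : forall (c : R) (u : nat -> R) a b, ssum (fun k => c * u k) a b = c * ssum u a b.
Proof. intros. unfold ssum. exact (sum_n_m_mult_l c u a b). Qed.
Lemma ssum_scal_r : forall (c : R) (u : nat -> R) a b, ssum (fun k => u k * c) a b = ssum u a b * c.
Proof. intros. unfold ssum. exact (sum_n_m_mult_r c u a b). Qed.
Lemma ssum_ext : forall (u v : nat -> R) a b, (forall k, (a <= k <= b)%nat -> u k = v k) -> ssum u a b = ssum v a b.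
Proof. intros. unfold ssum. apply sum_n_m_ext_loc. auto. Qed.
Lemma ssum_zero : forall a b, ssum (fun _ => 0) a b = 0.
Proof. intros. unfold ssum. exact (@sum_n_m_const_zero R_AbelianMonoid a b). Qed.
Lemma ssum_opp : forall (u : nat -> R) a b, ssum (fun k => - u k) a b = - ssum u a b.
Proof. intros. rewrite (ssum_ext _ (fun k => -1 * u k)). rewrite ssum_scal. lra. intros; lra. Qed.
Lemma ssum_minus : forall (u v : nat -> R) a b, ssum (fun k => u k - v k) a b = ssum u a b - ssum v a b.
Proof. intros. unfold Rminus. rewrite ssum_plus, ssum_opp. reflexivity. Qed.

Lemma ssum_Sr : forall (u : nat -> R) a b, (a <= S b)%nat -> ssum u a (S b) = ssum u a b + u (S b).
Proof. intros. unfold ssum. exact (sum_n_Sm u a b H). Qed.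
Lemma ssum_empty : forall (u : nat -> R) a b, (b < a)%nat -> ssum u a b = 0.
Proof. intros. unfold ssum. exact (sum_n_m_zero u a b H). Qed.
Lemma ssum_one : forall (u : nat -> R) a, ssum u a a = u a.
Proof. intros. unfold ssum. exact (sum_n_n u a). Qed.
Lemma ssum_chasles : forall (u : nat -> R) a m b, (a <= S m)%nat -> (m <= b)%nat ->
  ssum u a b = ssum u a m + ssum u (S m) b.
Proof. intros. unfold ssum. exact (sum_n_m_Chasles u a m b H H0). Qed.

Lemma ssum_le : forall (u v : nat -> R) a b, (forall k, (a <= k <= b)%nat -> u k <= v k) ->
  ssum u a b <= ssum v a b.
Proof. intros u v a b H. induction b.
 - destruct a. rewrite !ssum_one. apply H; lia. rewrite !ssum_empty by lia. lra.
 - destruct (le_lt_dec a (S b)).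
   + destruct (Nat.eq_dec a (S b)). subst. rewrite !ssum_one. apply H; lia.
     rewrite !ssum_Sr by lia. assert (u (S b) <= v (S b)) by (apply H; lia).
     assert (ssum u a b <= ssum v a b) by (apply IHb; intros; apply H; lia). lra.
   + rewrite !ssum_empty by lia. lra. Qed.
Lemma ssum_nonneg : forall (u : nat -> R) a b, (forall k, (a <= k <= b)%nat -> 0 <= u k) -> 0 <= ssum u a b.
Proof. intros. rewrite <- (ssum_zero a b). apply ssum_le. auto. Qed.
Lemma ssum_term_le : forall (u : nat -> R) a b k, (forall k, (a <= k <= b)%nat -> 0 <= u k) -> (a <= k <= b)%nat ->
  u k <= ssum u a b.
Proof. intros. rewrite (ssum_chasles u a k b) by lia. destruct k.
 - assert (a = 0)%nat by lia. subst. rewrite ssum_one. 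
   assert (0 <= ssum u 1 b) by (apply ssum_nonneg; intros; apply H; lia). lra.
 - rewrite (ssum_Sr u a k) by lia.
   assert (0 <= ssum u a k) by (apply ssum_nonneg; intros; apply H; lia).
   assert (0 <= ssum u (S (S k)) b) by (apply ssum_nonneg; intros; apply H; lia). lra. Qed.
Lemma ssum_mono_r : forall (u : nat -> R) a b b', (forall k, (a <= k <= b')%nat -> 0 <= u k) -> (b <= b')%nat ->
  ssum u a b <= ssum u a b'.
Proof. intros. destruct (le_lt_dec a (S b)).
 rewrite (ssum_chasles u a b b') by lia.
 assert (0 <= ssum u (S b) b') by (apply ssum_nonneg; intros; apply H; lia). lra.
 rewrite ssum_empty by lia. apply ssum_nonneg; auto. Qed.
Ltac req := match goal with |- @eq _ ?x ?y => change (@eq R x y) end.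
Ltac rring := try req; ring.

Lemma expand_sq : forall (w x : nat -> R) z a b,
  ssum (fun k => w k * (x k - z)^2) a b =
  ssum (fun k => w k * x k ^ 2) a b - 2 * z * ssum (fun k => w k * x k) a b + z^2 * ssum w a b.
Proof. intros.
 rewrite (ssum_ext _ (fun k => (w k * x k ^ 2 + (-2 * z) * (w k * x k)) + z^2 * w k)).
 2:{ intros. ring. }
 rewrite !ssum_plus, !ssum_scal. ring. Qed.

Lemma double_sq : forall (w x : nat -> R) a b,
  ssum (fun k => ssum (fun n => w k * w n * (x k - x n)^2) a b) a b =
  2 * ssum w a b * ssum (fun k => w k * x k ^ 2) a b - 2 * (ssum (fun k => w k * x k) a b)^2.
Proof. intros.
 rewrite (ssum_ext _ (fun k => w k * ssum (fun n => w n * (x n - x k)^2) a b)).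
 2:{ intros. rewrite <- ssum_scal. apply ssum_ext. intros; ring. }
 rewrite (ssum_ext _ (fun k => (ssum (fun n => w n * x n ^ 2) a b * w k + (-2 * ssum (fun n => w n * x n) a b) * (w k * x k)) + ssum w a b * (w k * x k ^2))).
 2:{ intros. rewrite expand_sq. ring. }
 rewrite !ssum_plus, !ssum_scal. ring. Qed.

Definition X (f : nat -> C) a k := ssum (fun j => Re (f j)) a k.
Definition Y (f : nat -> C) a k := ssum (fun j => Im (f j)) a k.
Definition w (alpha : nat -> C) k := Cmod (alpha k) ^ 2.

Lemma w_nonneg : forall alpha k, 0 <= w alpha k.
Proof. intros. unfold w. apply pow2_ge_0. Qed.

Lemma Re_csum : forall a k f, Re (csum a k f) = X f a k.
Proof. intros. rewrite csum_sum, Re_sum. reflexivity. Qed.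
Lemma Im_csum : forall a k f, Im (csum a k f) = Y f a k.
Proof. intros. rewrite csum_sum, Im_sum. reflexivity. Qed.

Lemma Cmod_mult_sq : forall x y : C, Cmod (x * y) ^ 2 = Cmod x ^ 2 * Cmod y ^ 2.
Proof. intros. rewrite Cmod_mult. ring. Qed.

Lemma X_split : forall f a m M, (a <= m)%nat -> (m <= M)%nat ->
  ssum (fun j => Re (f j)) (S m) M = X f a M - X f a m.
Proof. intros. unfold X. rewrite (ssum_chasles _ a m M) by lia. ring. Qed.
Lemma Y_split : forall f a m M, (a <= m)%nat -> (m <= M)%nat ->
  ssum (fun j => Im (f j)) (S m) M = Y f a M - Y f a m.
Proof. intros. unfold Y. rewrite (ssum_chasles _ a m M) by lia. ring. Qed.

Definition Qs alpha f a b := ssum (fun k => w alpha k * (X f a k ^ 2 + Y f a k ^ 2)) a b.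
Definition Ax alpha f a b := ssum (fun k => w alpha k * X f a k) a b.
Definition Ay alpha f a b := ssum (fun k => w alpha k * Y f a k) a b.

Lemma mu_sum : forall alpha a b, mu alpha a b = ssum (w alpha) a b.
Proof. intros. unfold mu. rewrite rsum_sum. reflexivity. Qed.

Lemma lI_identity : forall alpha a b f,
  l_I alpha a b f = 2 * mu alpha a b * Qs alpha f a b - 2 * (Ax alpha f a b ^ 2 + Ay alpha f a b ^ 2).
Proof. intros. unfold l_I. rewrite rsum_sum.
 rewrite (ssum_ext _ (fun k => ssum (fun n => w alpha k * w alpha n * (X f a k - X f a n)^2) a b
    + ssum (fun n => w alpha k * w alpha n * (Y f a k - Y f a n)^2) a b)).
 - rewrite ssum_plus, !double_sq, mu_sum. unfold Qs, Ax, Ay.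
   rewrite (ssum_ext (fun k => w alpha k * (X f a k ^ 2 + Y f a k ^ 2))
      (fun k => w alpha k * X f a k ^ 2 + w alpha k * Y f a k ^ 2)).
   2:{ intros. ring. }
   rewrite ssum_plus. ring.
 - intros k Hk. rewrite rsum_sum, <- ssum_plus. apply ssum_ext. intros n Hn.
   destruct (Nat.eqb_spec n k).
   + subst. ring.
   + rewrite !Cmod_mult_sq, (Cmod2_alt (csum _ _ f)). rewrite csum_sum, Re_sum, Im_sum. fold (w alpha k) (w alpha n).
     unfold w.
     destruct (le_lt_dec k n).
     * rewrite Nat.min_l, Nat.max_r by lia.
       rewrite (X_split f a k n), (Y_split f a k n) by lia. ring.
     * rewrite Nat.min_r, Nat.max_l by lia.
       rewrite (X_split f a n k), (Y_split f a n k) by lia. ring.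
Qed.

Lemma Re_minus : forall x y : C, Re (x - y) = Re x - Re y.
Proof. intros [x1 x2] [y1 y2]. simpl. ring. Qed.
Lemma Im_minus : forall x y : C, Im (x - y) = Im x - Im y.
Proof. intros [x1 x2] [y1 y2]. simpl. ring. Qed.
Lemma Re_plus : forall x y : C, Re (x + y) = Re x + Re y.
Proof. intros [x1 x2] [y1 y2]. simpl. ring. Qed.
Lemma Im_plus : forall x y : C, Im (x + y) = Im x + Im y.
Proof. intros [x1 x2] [y1 y2]. simpl. ring. Qed.
Lemma Re_mult : forall x y : C, Re (x * y) = Re x * Re y - Im x * Im y.
Proof. intros [x1 x2] [y1 y2]. simpl. ring. Qed.
Lemma Im_mult : forall x y : C, Im (x * y) = Re x * Im y + Im x * Re y.
Proof. intros [x1 x2] [y1 y2]. simpl. ring. Qed.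
Lemma Re_RtoC : forall r, Re (RtoC r) = r. Proof. reflexivity. Qed.
Lemma Im_RtoC : forall r, Im (RtoC r) = 0. Proof. reflexivity. Qed.

Lemma Vexp : forall alpha f a b (z : C),
  ssum (fun k => Cmod (alpha k * (csum a k f - z))^2) a b =
  Qs alpha f a b - 2 * Re z * Ax alpha f a b - 2 * Im z * Ay alpha f a b + (Re z ^ 2 + Im z ^ 2) * mu alpha a b.
Proof. intros.
 rewrite (ssum_ext _ (fun k => w alpha k * (X f a k - Re z)^2 + w alpha k * (Y f a k - Im z)^2)).
 2:{ intros. rewrite Cmod_mult_sq. unfold w.
     rewrite (Cmod2_alt (csum a k f - z)), Re_minus, Im_minus, Re_csum, Im_csum. ring. }
 rewrite ssum_plus, !expand_sq. unfold Qs, Ax, Ay. rewrite mu_sum.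
 rewrite (ssum_ext (fun k => w alpha k * (X f a k ^ 2 + Y f a k ^ 2))
      (fun k => w alpha k * X f a k ^ 2 + w alpha k * Y f a k ^ 2)).
 2:{ intros. ring. }
 rewrite ssum_plus. ring. Qed.

Lemma mu_nonneg : forall alpha a b, 0 <= mu alpha a b.
Proof. intros. rewrite mu_sum. apply ssum_nonneg. intros. apply w_nonneg. Qed.

Lemma mu_zero_w : forall alpha a b k, mu alpha a b = 0 -> (a <= k <= b)%nat -> w alpha k = 0.
Proof. intros. pose proof (w_nonneg alpha k).
 assert (w alpha k <= mu alpha a b). { rewrite mu_sum. apply ssum_term_le; auto. intros; apply w_nonneg. }
 lra. Qed.

Lemma Cmod_zeroC : Cmod (@zero C_AbelianMonoid) = 0.
Proof. exact Cmod_0. Qed.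

Lemma Cmod_csum_le : forall a k h, Cmod (csum a k h) <= ssum (fun j => Cmod (h j)) a k.
Proof. intros. rewrite csum_sum. induction k.
 - destruct a. rewrite sum_n_n, ssum_one. lra. rewrite sum_n_m_zero, ssum_empty by lia. rewrite Cmod_zeroC. lra.
 - destruct (le_lt_dec a (S k)).
   + destruct (Nat.eq_dec a (S k)). subst. rewrite sum_n_n, ssum_one. lra.
     rewrite sum_n_Sm, ssum_Sr by lia. eapply Rle_trans. apply Cmod_triangle. lra.
   + rewrite sum_n_m_zero, ssum_empty by lia. rewrite Cmod_zeroC. lra. Qed.

Lemma sqrt_le1 : forall x, sqrt x <= 1 -> x <= 1.
Proof. intros. destruct (Rle_dec x 1); auto. exfalso.
 assert (1 < sqrt x). { rewrite <- sqrt_1. apply sqrt_lt_1_alt. lra. } lra. Qed.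

Lemma lI_le_Qs : forall alpha a b f, l_I alpha a b f <= 2 * mu alpha a b * Qs alpha f a b.
Proof. intros. rewrite lI_identity. nra. Qed.

Lemma Qs_bound : forall alpha a b h, norm2I a b h <= 1 ->
  Qs alpha h a b <= mu alpha a b * INR (S b) ^ 2.
Proof. intros alpha a b h Hn. unfold norm2I in Hn. apply sqrt_le1 in Hn. rewrite rsum_sum in Hn.
 unfold Qs. rewrite mu_sum, <- ssum_scal_r. apply ssum_le. intros k Hk.
 apply Rmult_le_compat_l. apply w_nonneg.
 rewrite <- Re_csum, <- Im_csum, <- Cmod2_alt.
 assert (Cmod (csum a k h) <= INR (S b)).
 { eapply Rle_trans. apply Cmod_csum_le.
   apply Rle_trans with (ssum (fun _ => 1) a k).
   - apply ssum_le. intros j Hj.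
     assert (Cmod (h j) ^ 2 <= 1). { eapply Rle_trans; [|apply Hn].
       apply (ssum_term_le (fun k0 => Cmod (h k0) ^ 2)). intros; apply pow2_ge_0. lia. }
     pose proof (Cmod_ge_0 (h j)). nra.
   - unfold ssum. rewrite sum_n_m_const. rewrite Rmult_1_r. apply le_INR. lia. }
 pose proof (Cmod_ge_0 (csum a k h)). nra. Qed.

Lemma nu_zero_f : forall f a b j, ssum (fun k => Cmod (f k)^2) a b = 0 -> (a <= j <= b)%nat ->
  Re (f j) = 0 /\ Im (f j) = 0.
Proof. intros. assert (Cmod (f j) ^2 <= 0).
 { rewrite <- H. apply (ssum_term_le (fun k => Cmod (f k)^2)). intros; apply pow2_ge_0. auto. }
 rewrite Cmod2_alt in H1. split; nra. Qed.

Lemma LB : forall alpha eps a b f, 0 < eps -> mu alpha a b <> 0 -> ~ (L_I alpha a b > eps) ->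
  l_I alpha a b f <= eps^2 * mu alpha a b * ssum (fun k => Cmod (f k)^2) a b.
Proof. intros alpha eps a b f Heps Hmu HL.
 assert (Hmupos : 0 < mu alpha a b) by (pose proof (mu_nonneg alpha a b); lra).
 set (nu := ssum (fun k => Cmod (f k)^2) a b).
 assert (Hnu0 : 0 <= nu) by (apply ssum_nonneg; intros; apply pow2_ge_0).
 destruct (Req_dec nu 0) as [Hnu|Hnu].
 - assert (HX : forall k, (a <= k <= b)%nat -> X f a k = 0 /\ Y f a k = 0).
   { intros k Hk. unfold X, Y. split.
     - rewrite (ssum_ext _ (fun _ => 0)). apply ssum_zero. intros. apply (nu_zero_f f a b); auto; lia.
     - rewrite (ssum_ext _ (fun _ => 0)). apply ssum_zero. intros. apply (nu_zero_f f a b); auto; lia. }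
   rewrite lI_identity. unfold Qs, Ax, Ay.
   rewrite (ssum_ext (fun k => w alpha k * (X f a k ^ 2 + Y f a k ^ 2)) (fun _ => 0)).
   2:{ intros. destruct (HX k H). rewrite H0, H1. ring. }
   rewrite (ssum_ext (fun k => w alpha k * X f a k) (fun _ => 0)).
   2:{ intros. destruct (HX k H). rewrite H0. ring. }
   rewrite (ssum_ext (fun k => w alpha k * Y f a k) (fun _ => 0)).
   2:{ intros. destruct (HX k H). rewrite H1. ring. }
   rewrite !ssum_zero. fold nu. rewrite Hnu. lra.
 - assert (Hnup : 0 < nu) by lra.
   set (s := / sqrt nu).
   assert (Hs2 : s ^ 2 * nu = 1).
   { unfold s. rewrite <- Rinv_pow. rewrite pow2_sqrt by lra. field. lra.
     apply Rgt_not_eq, sqrt_lt_R0; lra. }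
   set (g := fun j => if andb (a <=? j) (j <=? b) then (RtoC s * f j)%C else RtoC 0).
   assert (Hg : forall j, (a <= j <= b)%nat -> g j = (RtoC s * f j)%C).
   { intros j Hj. unfold g. destruct Hj as [H1 H2]. apply Nat.leb_le in H1. apply Nat.leb_le in H2.
     rewrite H1, H2. reflexivity. }
   assert (HXg : forall k, (a <= k <= b)%nat -> X g a k = s * X f a k /\ Y g a k = s * Y f a k).
   { intros k Hk. unfold X, Y. rewrite <- !ssum_scal. split; apply ssum_ext; intros j Hj;
     rewrite Hg by lia; rewrite ?Re_mult, ?Im_mult, Re_RtoC, Im_RtoC; ring. }
   assert (HlI : l_I alpha a b g = s^2 * l_I alpha a b f).
   { rewrite !lI_identity. unfold Qs, Ax, Ay.
     rewrite (ssum_ext (fun k => w alpha k * (X g a k ^ 2 + Y g a k ^ 2))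
                       (fun k => s^2 * (w alpha k * (X f a k ^ 2 + Y f a k ^ 2)))).
     2:{ intros. destruct (HXg k H). rewrite H0, H1. ring. }
     rewrite (ssum_ext (fun k => w alpha k * X g a k) (fun k => s * (w alpha k * X f a k))).
     2:{ intros. destruct (HXg k H). rewrite H0. ring. }
     rewrite (ssum_ext (fun k => w alpha k * Y g a k) (fun k => s * (w alpha k * Y f a k))).
     2:{ intros. destruct (HXg k H). rewrite H1. ring. }
     rewrite !ssum_scal. ring. }
   assert (Hng : norm2I a b g = 1).
   { unfold norm2I. rewrite rsum_sum.
     rewrite (ssum_ext _ (fun k => s^2 * Cmod (f k)^2)).
     2:{ intros. rewrite Hg by lia. rewrite Cmod_mult_sq, Cmod_R. 
         rewrite pow2_abs. ring. }
     rewrite ssum_scal. fold nu. rewrite Hs2. apply sqrt_1. }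
   assert (Hsupp : supported_in a b g).
   { intros j Hj. unfold g. destruct Hj as [Hj|Hj].
     - assert ((a <=? j) = false) by (apply Nat.leb_gt; lia). rewrite H. reflexivity.
     - assert ((j <=? b) = false) by (apply Nat.leb_gt; lia). rewrite H. destruct (a <=? j); reflexivity. }
   unfold L_I in HL. destruct (Req_EM_T (mu alpha a b) 0) as [e|_]; [contradiction|].
   match type of HL with context [Lub_Rbar ?E] => set (EE := E) in HL end.
   destruct (Lub_Rbar_correct EE) as [Hub Hleast].
   assert (Hmem : EE (l_I alpha a b g / mu alpha a b)).
   { exists g. split; [exact Hsupp|]. split; [lra|reflexivity]. }
   assert (Hbnd : is_ub_Rbar EE (2 * mu alpha a b * INR (S b) ^ 2)).
   { intros r [h [_ [Hh Hr]]]. subst r. cbn [Rbar_le].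
     pose proof (lI_le_Qs alpha a b h). pose proof (Qs_bound alpha a b h Hh).
     apply Rmult_le_reg_r with (mu alpha a b); auto.
     unfold Rdiv. rewrite Rmult_assoc, Rinv_l by lra. nra. }
   pose proof (Hub _ Hmem) as H1. pose proof (Hleast _ Hbnd) as H2.
   destruct (Lub_Rbar EE) as [s'| |]; simpl in H1, H2; try contradiction.
   simpl in HL.
   assert (Hs' : s' <= eps^2).
   { destruct (Rle_dec s' 0). nra. assert (sqrt s' <= eps) by lra.
     rewrite <- (sqrt_sqrt s') by lra. pose proof (sqrt_pos s'). nra. }
   assert (l_I alpha a b g <= eps^2 * mu alpha a b).
   { apply Rmult_le_reg_r with (/ mu alpha a b). apply Rinv_0_lt_compat; lra.
     rewrite Rmult_assoc, Rinv_r by lra. unfold Rdiv in H1. lra. }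
   rewrite HlI in H. fold nu.
   assert (Hf : l_I alpha a b f = (s^2 * l_I alpha a b f) * nu). { transitivity (l_I alpha a b f * (s^2 * nu)). rewrite Hs2. ring. ring. } rewrite Hf.
   apply Rle_trans with (eps ^ 2 * mu alpha a b * nu). apply Rmult_le_compat_r; lra. lra.
Qed.

Definition mfin alpha a b f : C :=
  (RtoC (/ mu alpha a b) * csum a b (fun k => RtoC (w alpha k) * csum a k f))%C.

Lemma Re_mfin : forall alpha a b f, Re (mfin alpha a b f) = / mu alpha a b * Ax alpha f a b.
Proof. intros. unfold mfin. rewrite Re_mult, Re_RtoC, Im_RtoC, csum_sum, Re_sum. unfold Ax.
 rewrite (ssum_ext _ (fun k => w alpha k * X f a k)). ring.
 intros. rewrite Re_mult, Re_RtoC, Im_RtoC, Re_csum. ring. Qed.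
Lemma Im_mfin : forall alpha a b f, Im (mfin alpha a b f) = / mu alpha a b * Ay alpha f a b.
Proof. intros. unfold mfin. rewrite Im_mult, Re_RtoC, Im_RtoC, csum_sum, Im_sum. unfold Ay.
 rewrite (ssum_ext _ (fun k => w alpha k * Y f a k)). ring.
 intros. rewrite Im_mult, Re_RtoC, Im_RtoC, Im_csum. ring. Qed.

Lemma FL : forall alpha eps a b f, 0 < eps -> ~ (L_I alpha a b > eps) ->
  ssum (fun k => Cmod (alpha k * (csum a k f - mfin alpha a b f))^2) a b
   <= eps^2/2 * ssum (fun k => Cmod (f k)^2) a b.
Proof. intros alpha eps a b f Heps HL.
 assert (Hnu0 : 0 <= ssum (fun k => Cmod (f k)^2) a b) by (apply ssum_nonneg; intros; apply pow2_ge_0).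
 rewrite Vexp. rewrite Re_mfin, Im_mfin.
 destruct (Req_dec (mu alpha a b) 0) as [Hmu|Hmu].
 - unfold Qs, Ax, Ay.
   rewrite (ssum_ext (fun k => w alpha k * (X f a k ^ 2 + Y f a k ^ 2)) (fun _ => 0)).
   2:{ intros. rewrite (mu_zero_w alpha a b k Hmu H). ring. }
   rewrite (ssum_ext (fun k => w alpha k * X f a k) (fun _ => 0)).
   2:{ intros. rewrite (mu_zero_w alpha a b k Hmu H). ring. }
   rewrite (ssum_ext (fun k => w alpha k * Y f a k) (fun _ => 0)).
   2:{ intros. rewrite (mu_zero_w alpha a b k Hmu H). ring. }
   rewrite !ssum_zero, Hmu. nra.
 - assert (Hmupos : 0 < mu alpha a b) by (pose proof (mu_nonneg alpha a b); lra).
   pose proof (LB alpha eps a b f Heps Hmu HL) as H. rewrite lI_identity in H.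
   set (m := mu alpha a b) in *. set (Q := Qs alpha f a b) in *. set (A1 := Ax alpha f a b) in *.
   set (A2 := Ay alpha f a b) in *. set (nu := ssum (fun k => Cmod (f k)^2) a b) in *.
   apply Rmult_le_reg_r with m; auto.
   replace ((Q - 2 * (/ m * A1) * A1 - 2 * (/ m * A2) * A2 + ((/ m * A1) ^ 2 + (/ m * A2) ^ 2) * m) * m)
     with (m * Q - (A1^2 + A2^2)) by (field; lra).
   nra.
Qed.

Lemma series_lim : forall u, ex_series u -> is_lim_seq (sum_n u) (Series u).
Proof. intros. apply Series_correct in H. exact H. Qed.

Lemma sum_n_S' : forall (u : nat -> R) N, sum_n u (S N) = sum_n u N + u (S N).
Proof. intros. exact (sum_Sn u N). Qed.

Lemma sum_n_mono : forall (u : nat -> R), (forall n, 0 <= u n) -> forall N M, (N <= M)%nat -> sum_n u N <= sum_n u M.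
Proof. intros u Hu N M H. induction H. lra. rewrite sum_n_S'. specialize (Hu (S m)). lra. Qed.

Lemma bounded_series : forall (u : nat -> R) D, (forall n, 0 <= u n) -> (forall N, sum_n u N <= D) -> ex_series u.
Proof. intros u D Hu HD. destruct (ex_finite_lim_seq_incr (sum_n u) D) as [l Hl].
 intros. rewrite sum_n_S'. specialize (Hu (S n)). lra. exact HD.
 exists l. exact Hl. Qed.

Lemma partial_le : forall (u : nat -> R) N, (forall n, 0 <= u n) -> ex_series u -> sum_n u N <= Series u.
Proof. intros. assert (H1 := series_lim u H0).
 assert (Rbar_le (sum_n u N) (Series u)).
 { apply (is_lim_seq_le_loc (fun _ => sum_n u N) (sum_n u)). exists N. intros. apply sum_n_mono; auto.
   apply is_lim_seq_const. exact H1. }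
 exact H2. Qed.

Lemma series_le_bound : forall (u : nat -> R) D, (forall n, 0 <= u n) -> (forall N, sum_n u N <= D) -> Series u <= D.
Proof. intros. assert (ex_series u) by (eapply bounded_series; eauto).
 assert (Rbar_le (Series u) D).
 { apply (is_lim_seq_le_loc (sum_n u) (fun _ => D)). exists 0%nat. intros. auto.
   apply series_lim; auto. apply is_lim_seq_const. }
 exact H2. Qed.

Lemma shift_sum : forall (u : nat -> R) a N, ssum u a (a + N) = sum_n (fun n => u (a + n)%nat) N.
Proof. intros. induction N.
 - rewrite Nat.add_0_r, ssum_one. rewrite sum_O. rewrite Nat.add_0_r. reflexivity.
 - replace (a + S N)%nat with (S (a + N)) by lia. rewrite ssum_Sr by lia. rewrite sum_n_S', IHN.
   replace (a + S N)%nat with (S (a + N)) by lia. reflexivity. Qed.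

Lemma ssum_le_series : forall (u : nat -> R) a M, (forall n, 0 <= u n) -> ex_series (fun n => u (a + n)%nat) ->
  ssum u a M <= Series (fun n => u (a + n)%nat).
Proof. intros. destruct (le_lt_dec a M).
 - replace M with (a + (M - a))%nat by lia. rewrite shift_sum. apply partial_le; auto.
 - rewrite ssum_empty by lia. eapply Rle_trans; [|apply (partial_le _ 0); auto].
   rewrite sum_O. auto. Qed.

Lemma series_nonneg : forall (u : nat -> R), (forall n, 0 <= u n) -> ex_series u -> 0 <= Series u.
Proof. intros. eapply Rle_trans; [|apply (partial_le _ 0); auto]. rewrite sum_O. auto. Qed.

Lemma Vexp_r : forall alpha f a b zx zy,
  ssum (fun k => w alpha k * ((X f a k - zx)^2 + (Y f a k - zy)^2)) a b =
  Qs alpha f a b - 2 * zx * Ax alpha f a b - 2 * zy * Ay alpha f a b + (zx ^ 2 + zy ^ 2) * mu alpha a b.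
Proof. intros.
 rewrite (ssum_ext _ (fun k => w alpha k * (X f a k - zx)^2 + w alpha k * (Y f a k - zy)^2)).
 2:{ intros. ring. }
 rewrite ssum_plus, !expand_sq. unfold Qs, Ax, Ay. rewrite mu_sum.
 rewrite (ssum_ext (fun k => w alpha k * (X f a k ^ 2 + Y f a k ^ 2))
      (fun k => w alpha k * X f a k ^ 2 + w alpha k * Y f a k ^ 2)).
 2:{ intros. ring. }
 rewrite ssum_plus. ring. Qed.

Lemma FLr : forall alpha eps a b f, 0 < eps -> ~ (L_I alpha a b > eps) -> 0 < mu alpha a b ->
  mu alpha a b * Qs alpha f a b - (Ax alpha f a b ^ 2 + Ay alpha f a b ^ 2)
   <= eps^2/2 * ssum (fun k => Cmod (f k)^2) a b * mu alpha a b.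
Proof. intros. pose proof (LB alpha eps a b f H ltac:(lra) H0). rewrite lI_identity in H2. nra. Qed.

Lemma Cmod_sq_nonneg : forall z, 0 <= Cmod z ^ 2.
Proof. intros. apply pow2_ge_0. Qed.

Lemma Qs_nonneg_terms : forall alpha f a k, 0 <= w alpha k * (X f a k ^ 2 + Y f a k ^ 2).
Proof. intros. pose proof (w_nonneg alpha k). nra. Qed.

Section Tail.
Variable alpha f : nat -> C.
Variable eps : R.
Variable a : nat.
Hypothesis Halpha : ell2 alpha.
Hypothesis Hf : ell2 f.
Hypothesis Heps : 0 < eps.
Hypothesis HL : forall M, (a <= M)%nat -> ~ (L_I alpha a M > eps).

Definition Ft := Series (fun n => Cmod (f (a + n)%nat) ^ 2).
Definition muinf := Series (fun n => w alpha (a + n)%nat).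
Definition CC := eps^2/2 * Ft.

Lemma ex_wt : ex_series (fun n => w alpha (a + n)%nat).
Proof. apply (proj1 (ex_series_incr_n (fun k => w alpha k) a)). exact Halpha. Qed.
Lemma ex_ft : ex_series (fun n => Cmod (f (a + n)%nat) ^ 2).
Proof. apply (proj1 (ex_series_incr_n (fun k => Cmod (f k) ^ 2) a)). exact Hf. Qed.

Lemma mu_le_inf : forall M, mu alpha a M <= muinf.
Proof. intros. rewrite mu_sum. apply (ssum_le_series (w alpha)). apply w_nonneg. apply ex_wt. Qed.
Lemma nu_le_Ft : forall M, ssum (fun k => Cmod (f k)^2) a M <= Ft.
Proof. intros. apply (ssum_le_series (fun k => Cmod (f k)^2)). intros; apply pow2_ge_0. apply ex_ft. Qed.
Lemma Ft_nonneg : 0 <= Ft.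
Proof. apply series_nonneg. intros; apply pow2_ge_0. apply ex_ft. Qed.

Lemma var_bound : forall M, (a <= M)%nat -> 0 < mu alpha a M ->
  mu alpha a M * Qs alpha f a M - (Ax alpha f a M ^ 2 + Ay alpha f a M ^ 2) <= CC * mu alpha a M.
Proof. intros. eapply Rle_trans. apply (FLr alpha eps a M f Heps (HL M H) H0). unfold CC.
 pose proof (nu_le_Ft M). apply Rmult_le_compat_r. lra. apply Rmult_le_compat_l. nra. auto. Qed.

Section K0.
Variable k0 : nat.
Hypothesis Hk0 : (a <= k0)%nat.
Hypothesis Hw0 : 0 < w alpha k0.

Lemma mu_ge_w0 : forall M, (k0 <= M)%nat -> w alpha k0 <= mu alpha a M.
Proof. intros. rewrite mu_sum. apply (ssum_term_le (w alpha)). intros; apply w_nonneg. lia. Qed.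

Definition DD := CC + muinf * (2 * (X f a k0 ^ 2 + Y f a k0 ^ 2) + 2 * CC / w alpha k0).

Lemma Qs_bnd_big : forall M, (k0 <= M)%nat -> Qs alpha f a M <= DD.
Proof. intros M HM. pose proof (mu_ge_w0 M HM) as Hm. set (m := mu alpha a M) in *.
 assert (Hmp : 0 < m) by lra.
 pose proof (var_bound M ltac:(lia) Hmp) as HV. fold m in HV.
 set (zx := Ax alpha f a M / m). set (zy := Ay alpha f a M / m).
 pose proof (Vexp_r alpha f a M zx zy) as HE. fold m in HE.
 assert (Hterm : w alpha k0 * ((X f a k0 - zx)^2 + (Y f a k0 - zy)^2) <=
          ssum (fun k => w alpha k * ((X f a k - zx)^2 + (Y f a k - zy)^2)) a M).
 { apply (ssum_term_le (fun k => w alpha k * ((X f a k - zx)^2 + (Y f a k - zy)^2))).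
   intros. apply Rmult_le_pos. apply w_nonneg. apply Rplus_le_le_0_compat; apply pow2_ge_0. lia. }
 assert (HV' : Qs alpha f a M - 2 * zx * Ax alpha f a M - 2 * zy * Ay alpha f a M + (zx ^ 2 + zy ^ 2) * m <= CC).
 { unfold zx, zy. apply Rmult_le_reg_r with m; auto.
   replace ((Qs alpha f a M - 2 * (Ax alpha f a M / m) * Ax alpha f a M - 2 * (Ay alpha f a M / m) * Ay alpha f a M +
    ((Ax alpha f a M / m) ^ 2 + (Ay alpha f a M / m) ^ 2) * m) * m) with
    (m * Qs alpha f a M - (Ax alpha f a M ^ 2 + Ay alpha f a M ^ 2)) by (field; lra). lra. }
 assert (Hq : Qs alpha f a M = (Qs alpha f a M - 2 * zx * Ax alpha f a M - 2 * zy * Ay alpha f a M + (zx ^ 2 + zy ^ 2) * m) + m * (zx^2 + zy^2)).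
 { unfold zx, zy. field. lra. }
 clearbody zx zy.
 assert (Hz : w alpha k0 * (zx^2 + zy^2) <= w alpha k0 * (2 * (X f a k0 ^ 2 + Y f a k0 ^ 2)) + 2 * CC).
 { assert (zx^2 + zy^2 <= 2 * (X f a k0 ^ 2 + Y f a k0 ^ 2) + 2 * ((X f a k0 - zx)^2 + (Y f a k0 - zy)^2)).
   { pose proof (pow2_ge_0 (2 * X f a k0 - zx)). pose proof (pow2_ge_0 (2 * Y f a k0 - zy)). nra. }
   nra. }
 assert (Hzz : zx^2 + zy^2 <= 2 * (X f a k0 ^ 2 + Y f a k0 ^ 2) + 2 * CC / w alpha k0).
 { apply Rmult_le_reg_l with (w alpha k0); auto. unfold Rdiv.
   replace (w alpha k0 * (2 * (X f a k0 ^ 2 + Y f a k0 ^ 2) + 2 * CC * / w alpha k0)) with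
     (w alpha k0 * (2 * (X f a k0 ^ 2 + Y f a k0 ^ 2)) + 2 * CC) by (field; lra). lra. }
 pose proof (mu_le_inf M). fold m in H.
 assert (0 <= zx^2 + zy^2) by nra.
 unfold DD. rewrite Hq.
 assert (m * (zx^2+zy^2) <= muinf * (2 * (X f a k0 ^ 2 + Y f a k0 ^ 2) + 2 * CC / w alpha k0)).
 { apply Rle_trans with (muinf * (zx^2+zy^2)). apply Rmult_le_compat_r; lra.
   apply Rmult_le_compat_l; lra. }
 lra. Qed.

Lemma Qs_bnd : forall M, Qs alpha f a M <= DD.
Proof. intros. destruct (le_lt_dec k0 M). apply Qs_bnd_big; auto.
 eapply Rle_trans; [|apply (Qs_bnd_big k0); lia]. unfold Qs. apply ssum_mono_r. intros; apply Qs_nonneg_terms. lia. Qed.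

Lemma ex_qt : ex_series (fun n => w alpha (a + n)%nat * (X f a (a + n)%nat ^ 2 + Y f a (a + n)%nat ^ 2)).
Proof. apply bounded_series with DD. intros; apply Qs_nonneg_terms.
 intros. rewrite <- (shift_sum (fun k => w alpha k * (X f a k ^ 2 + Y f a k ^ 2))). apply Qs_bnd. Qed.


Lemma abs_le_sq : forall x, Rabs x <= 1 + x ^ 2.
Proof. intros. destruct (Rle_dec 0 x). rewrite Rabs_right by lra. nra. rewrite Rabs_left by lra. nra. Qed.

Lemma ex_ux : ex_series (fun n => w alpha (a + n)%nat * X f a (a + n)%nat).
Proof. apply (@ex_series_le R_AbsRing R_CompleteNormedModule _ (fun n => w alpha (a + n)%nat + w alpha (a + n)%nat * (X f a (a + n)%nat ^ 2 + Y f a (a + n)%nat ^ 2))).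
 - intros. change (norm (w alpha (a + n)%nat * X f a (a + n)%nat)) with (Rabs (w alpha (a + n)%nat * X f a (a + n)%nat)).
   rewrite Rabs_mult, (Rabs_right (w alpha _)) by (apply Rle_ge, w_nonneg).
   pose proof (abs_le_sq (X f a (a + n)%nat)). pose proof (w_nonneg alpha (a + n)%nat).
   pose proof (pow2_ge_0 (Y f a (a + n)%nat)). nra.
 - apply (ex_series_plus (fun n => w alpha (a + n)%nat)). apply ex_wt. apply ex_qt. Qed.

Lemma ex_uy : ex_series (fun n => w alpha (a + n)%nat * Y f a (a + n)%nat).
Proof. apply (@ex_series_le R_AbsRing R_CompleteNormedModule _ (fun n => w alpha (a + n)%nat + w alpha (a + n)%nat * (X f a (a + n)%nat ^ 2 + Y f a (a + n)%nat ^ 2))).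
 - intros. change (norm (w alpha (a + n)%nat * Y f a (a + n)%nat)) with (Rabs (w alpha (a + n)%nat * Y f a (a + n)%nat)).
   rewrite Rabs_mult, (Rabs_right (w alpha _)) by (apply Rle_ge, w_nonneg).
   pose proof (abs_le_sq (Y f a (a + n)%nat)). pose proof (w_nonneg alpha (a + n)%nat).
   pose proof (pow2_ge_0 (X f a (a + n)%nat)). nra.
 - apply (ex_series_plus (fun n => w alpha (a + n)%nat)). apply ex_wt. apply ex_qt. Qed.

Lemma muinf_pos : 0 < muinf.
Proof. pose proof (mu_le_inf k0). pose proof (mu_ge_w0 k0 (le_n _)). lra. Qed.

Lemma tail_bound_K0 : forall M0,
  ssum (fun k => w alpha k * ((X f a k - Series (fun n => w alpha (a + n)%nat * X f a (a + n)%nat) / muinf)^2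
                             + (Y f a k - Series (fun n => w alpha (a + n)%nat * Y f a (a + n)%nat) / muinf)^2)) a M0 <= CC.
Proof. intros M0.
 set (Sx := Series (fun n => w alpha (a + n)%nat * X f a (a + n)%nat)).
 set (Sy := Series (fun n => w alpha (a + n)%nat * Y f a (a + n)%nat)).
 set (zx := Sx / muinf). set (zy := Sy / muinf).
 set (LHS := ssum _ a M0).
 set (sA := sum_n (fun n => w alpha (a + n)%nat * X f a (a + n)%nat)).
 set (sB := sum_n (fun n => w alpha (a + n)%nat * Y f a (a + n)%nat)).
 set (sm := sum_n (fun n => w alpha (a + n)%nat)).
 pose proof muinf_pos as Hmi.
 set (h := fun N => CC + ((sA N - zx * sm N) * (sA N - zx * sm N) + (sB N - zy * sm N) * (sB N - zy * sm N)) / sm N).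
 assert (Hlim : is_lim_seq h (CC + ((Sx - zx * muinf) * (Sx - zx * muinf) + (Sy - zy * muinf) * (Sy - zy * muinf)) / muinf)).
 { unfold h. apply is_lim_seq_plus'. apply is_lim_seq_const.
   assert (HA : is_lim_seq sA Sx) by (apply series_lim; apply ex_ux).
   assert (HB : is_lim_seq sB Sy) by (apply series_lim; apply ex_uy).
   assert (HM : is_lim_seq sm muinf) by (apply series_lim; apply ex_wt).
   assert (HzA : is_lim_seq (fun N => sA N - zx * sm N) (Sx - zx * muinf)).
   { apply is_lim_seq_minus'. auto. apply (is_lim_seq_mult' (fun _ => zx)). apply is_lim_seq_const. auto. }
   assert (HzB : is_lim_seq (fun N => sB N - zy * sm N) (Sy - zy * muinf)).
   { apply is_lim_seq_minus'. auto. apply (is_lim_seq_mult' (fun _ => zy)). apply is_lim_seq_const. auto. }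
   apply is_lim_seq_div'; [|auto|lra].
   apply is_lim_seq_plus'; apply is_lim_seq_mult'; auto. }
 replace (CC + ((Sx - zx * muinf) * (Sx - zx * muinf) + (Sy - zy * muinf) * (Sy - zy * muinf)) / muinf) with CC in Hlim
   by (unfold zx, zy; field; lra).
 assert (Hev : forall N, (M0 <= a + N)%nat -> (k0 <= a + N)%nat -> LHS <= h N).
 { intros N H1 H2. set (M := (a + N)%nat) in *.
   assert (Hmu : w alpha k0 <= mu alpha a M) by (apply mu_ge_w0; auto).
   assert (Hsm : sm N = mu alpha a M). { unfold sm, M. rewrite <- shift_sum, mu_sum. reflexivity. }
   assert (HsA : sA N = Ax alpha f a M). { unfold sA, M. rewrite <- (shift_sum (fun k => w alpha k * X f a k)). reflexivity. }
   assert (HsB : sB N = Ay alpha f a M). { unfold sB, M. rewrite <- (shift_sum (fun k => w alpha k * Y f a k)). reflexivity. }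
   unfold h. rewrite Hsm, HsA, HsB.
   apply Rle_trans with (ssum (fun k => w alpha k * ((X f a k - zx)^2 + (Y f a k - zy)^2)) a M).
   { apply ssum_mono_r; auto. intros. apply Rmult_le_pos. apply w_nonneg. apply Rplus_le_le_0_compat; apply pow2_ge_0. }
   rewrite Vexp_r.
   assert (Hmp : 0 < mu alpha a M) by lra.
   pose proof (var_bound M ltac:(lia) Hmp) as HV.
   set (m := mu alpha a M) in *. set (Q := Qs alpha f a M) in *. set (A1 := Ax alpha f a M) in *. set (A2 := Ay alpha f a M) in *.
   clearbody zx zy m Q A1 A2.
   assert (Q <= CC + (A1^2 + A2^2) / m).
   { apply Rmult_le_reg_l with m; auto. replace (m * (CC + (A1 ^ 2 + A2 ^ 2) / m)) with (CC * m + (A1^2 + A2^2)) by (field; lra). lra. }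
   replace (CC + ((A1 - zx * m) * (A1 - zx * m) + (A2 - zy * m) * (A2 - zy * m)) / m) with
     (CC + (A1^2 + A2^2) / m - 2 * zx * A1 - 2 * zy * A2 + (zx ^ 2 + zy ^ 2) * m) by (field; lra).
   lra. }
 assert (Rbar_le LHS CC).
 { apply (is_lim_seq_le_loc (fun _ => LHS) h). exists (M0 + k0)%nat. intros. apply Hev; lia.
   apply is_lim_seq_const. exact Hlim. }
 exact H. Qed.

End K0.
End Tail.

Lemma C_ext : forall x y : C, Re x = Re y -> Im x = Im y -> x = y.
Proof. intros [x1 x2] [y1 y2]. simpl. intros; subst; reflexivity. Qed.

Lemma csum_plus : forall a b (f g : nat -> C), csum a b (fun j => (f j + g j)%C) = (csum a b f + csum a b g)%C.
Proof. intros. rewrite !csum_sum. exact (sum_n_m_plus f g a b). Qed.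
Lemma csum_scal : forall a b (c : C) (f : nat -> C), csum a b (fun j => (c * f j)%C) = (c * csum a b f)%C.
Proof. intros. rewrite !csum_sum. exact (@sum_n_m_mult_l C_Ring c f a b). Qed.
Lemma csum_ext : forall a b (f g : nat -> C), (forall j, (a <= j <= b)%nat -> f j = g j) -> csum a b f = csum a b g.
Proof. intros. rewrite !csum_sum. apply sum_n_m_ext_loc. auto. Qed.

Definition SXf alpha a f := Series (fun n => w alpha (a + n)%nat * X f a (a + n)%nat).
Definition SYf alpha a f := Series (fun n => w alpha (a + n)%nat * Y f a (a + n)%nat).
Definition minf alpha a f : C := (RtoC (/ muinf alpha a) * (SXf alpha a f, SYf alpha a f))%C.

Lemma cmod_term : forall alpha a f k (z : C),
  Cmod (alpha k * (csum a k f - z))^2 = w alpha k * ((X f a k - Re z)^2 + (Y f a k - Im z)^2).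
Proof. intros. rewrite Cmod_mult_sq, (Cmod2_alt (csum a k f - z)), Re_minus, Im_minus, Re_csum, Im_csum.
 reflexivity. Qed.

Section TL.
Variable alpha f : nat -> C.
Variable eps : R.
Variable a : nat.
Hypothesis Halpha : ell2 alpha.
Hypothesis Hf : ell2 f.
Hypothesis Heps : 0 < eps.
Hypothesis HL : forall M, (a <= M)%nat -> ~ (L_I alpha a M > eps).

Lemma no_k0_w : ~ (exists k0, (a <= k0)%nat /\ 0 < w alpha k0) -> forall k, (a <= k)%nat -> w alpha k = 0.
Proof. intros. pose proof (w_nonneg alpha k). destruct (Req_dec (w alpha k) 0); auto.
 exfalso. apply H. exists k. split; auto. lra. Qed.

Lemma TL : forall M, ssum (fun k => Cmod (alpha k * (csum a k f - minf alpha a f))^2) a M <= eps^2/2 * Ft f a.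
Proof. intros M. rewrite (ssum_ext _ (fun k => w alpha k * ((X f a k - Re (minf alpha a f))^2 + (Y f a k - Im (minf alpha a f))^2))).
 2:{ intros. apply cmod_term. }
 destruct (classic (exists k0, (a <= k0)%nat /\ 0 < w alpha k0)) as [[k0 [Hk0 Hw0]]|Hno].
 - unfold minf, SXf, SYf. rewrite Re_mult, Im_mult, Re_RtoC, Im_RtoC. simpl Re. simpl Im.
   pose proof (tail_bound_K0 alpha f eps a Halpha Hf Heps HL k0 Hk0 Hw0 M) as H. unfold CC in H.
   eapply Rle_trans; [|exact H]. apply Req_le. apply ssum_ext. intros. unfold Rdiv. ring_simplify. reflexivity.
 - rewrite (ssum_ext _ (fun _ => 0)). rewrite ssum_zero. pose proof (Ft_nonneg f a Hf). nra.
   intros. rewrite (no_k0_w Hno k) by lia. ring. Qed.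

Lemma TLconv : ex_series (fun n => w alpha (a + n)%nat * X f a (a + n)%nat) /\
               ex_series (fun n => w alpha (a + n)%nat * Y f a (a + n)%nat).
Proof. destruct (classic (exists k0, (a <= k0)%nat /\ 0 < w alpha k0)) as [[k0 [Hk0 Hw0]]|Hno].
 - split. apply (ex_ux alpha f eps a Halpha Hf Heps HL k0 Hk0 Hw0). apply (ex_uy alpha f eps a Halpha Hf Heps HL k0 Hk0 Hw0).
 - split; apply (@ex_series_le R_AbsRing R_CompleteNormedModule _ (fun n => w alpha (a + n)%nat));
   try apply (ex_wt alpha a Halpha); intros n; change (norm ?x) with (Rabs x);
   rewrite (no_k0_w Hno (a + n)%nat) by lia; rewrite Rmult_0_l, Rabs_R0; lra. Qed.
End TL.

Lemma X_plus : forall f g a k, X (fun j => (f j + g j)%C) a k = X f a k + X g a k.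
Proof. intros. unfold X. rewrite <- ssum_plus. apply ssum_ext. intros. apply Re_plus. Qed.
Lemma Y_plus : forall f g a k, Y (fun j => (f j + g j)%C) a k = Y f a k + Y g a k.
Proof. intros. unfold Y. rewrite <- ssum_plus. apply ssum_ext. intros. apply Im_plus. Qed.
Lemma X_scal : forall (c : C) f a k, X (fun j => (c * f j)%C) a k = Re c * X f a k - Im c * Y f a k.
Proof. intros. unfold X, Y. rewrite <- !ssum_scal, <- ssum_minus. apply ssum_ext. intros. apply Re_mult. Qed.
Lemma Y_scal : forall (c : C) f a k, Y (fun j => (c * f j)%C) a k = Re c * Y f a k + Im c * X f a k.
Proof. intros. unfold X, Y. rewrite <- !ssum_scal, <- ssum_plus. apply ssum_ext. intros. rewrite Im_mult. ring. Qed.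

Lemma Series_lin2 : forall (u v : nat -> R) p q, ex_series u -> ex_series v ->
  Series (fun n => p * u n + q * v n) = p * Series u + q * Series v.
Proof. intros. rewrite Series_plus. rewrite !Series_scal_l. reflexivity.
 apply (ex_series_scal_l p u H). apply (ex_series_scal_l q v H0). Qed.

Section Lin.
Variable alpha : nat -> C.
Variable a : nat.
Definition uxs f n := w alpha (a + n)%nat * X f a (a + n)%nat.
Definition uys f n := w alpha (a + n)%nat * Y f a (a + n)%nat.

Lemma minf_plus : forall f g, ex_series (uxs f) -> ex_series (uys f) -> ex_series (uxs g) -> ex_series (uys g) ->
  minf alpha a (fun j => (f j + g j)%C) = (minf alpha a f + minf alpha a g)%C.
Proof. intros f g H1 H2 H3 H4. unfold minf, SXf, SYf.
 rewrite (Series_ext _ (fun n => 1 * uxs f n + 1 * uxs g n)).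
 2:{ intros. unfold uxs. rewrite X_plus. ring. }
 rewrite (Series_ext (fun n => w alpha (a + n)%nat * Y (fun j => (f j + g j)%C) a (a + n)%nat) (fun n => 1 * uys f n + 1 * uys g n)).
 2:{ intros. unfold uys. rewrite Y_plus. ring. }
 rewrite !Series_lin2 by auto. unfold uxs, uys.
 apply C_ext; rewrite ?Re_plus, ?Im_plus, ?Re_mult, ?Im_mult, ?Re_RtoC, ?Im_RtoC; simpl Re; simpl Im; ring. Qed.

Lemma minf_scal : forall (c : C) f, ex_series (uxs f) -> ex_series (uys f) ->
  minf alpha a (fun j => (c * f j)%C) = (c * minf alpha a f)%C.
Proof. intros c f H1 H2. unfold minf, SXf, SYf.
 rewrite (Series_ext _ (fun n => Re c * uxs f n + (- Im c) * uys f n)).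
 2:{ intros. unfold uxs, uys. rewrite X_scal. ring. }
 rewrite (Series_ext (fun n => w alpha (a + n)%nat * Y (fun j => (c * f j)%C) a (a + n)%nat) (fun n => Re c * uys f n + Im c * uxs f n)).
 2:{ intros. unfold uxs, uys. rewrite Y_scal. ring. }
 rewrite !Series_lin2 by auto. unfold uxs, uys.
 apply C_ext; rewrite ?Re_plus, ?Im_plus, ?Re_mult, ?Im_mult, ?Re_RtoC, ?Im_RtoC; simpl Re; simpl Im; ring. Qed.
End Lin.

Lemma mfin_plus : forall alpha a b f g, mfin alpha a b (fun j => (f j + g j)%C) = (mfin alpha a b f + mfin alpha a b g)%C.
Proof. intros. unfold mfin.
 rewrite (csum_ext a b _ (fun k => (RtoC (w alpha k) * csum a k f + RtoC (w alpha k) * csum a k g)%C)).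
 2:{ intros. rewrite csum_plus. ring. }
 rewrite csum_plus. ring. Qed.

Lemma mfin_scal : forall alpha a b (c : C) f, mfin alpha a b (fun j => (c * f j)%C) = (c * mfin alpha a b f)%C.
Proof. intros. unfold mfin.
 rewrite (csum_ext a b _ (fun k => (c * (RtoC (w alpha k) * csum a k f))%C)).
 2:{ intros. rewrite csum_scal. ring. }
 rewrite csum_scal. ring. Qed.

Definition prec (f : nat -> C) (n : nat) : C := match n with O => RtoC 0 | S n' => csum 0 n' f end.

Lemma prec_plus : forall f g n, prec (fun j => (f j + g j)%C) n = (prec f n + prec g n)%C.
Proof. intros. destruct n; simpl prec. ring. apply csum_plus. Qed.
Lemma prec_scal : forall (c : C) f n, prec (fun j => (c * f j)%C) n = (c * prec f n)%C.
Proof. intros. destruct n; simpl prec. ring. apply csum_scal. Qed.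

Lemma prec_split : forall f a k, (a <= k)%nat -> csum 0 k f = (prec f a + csum a k f)%C.
Proof. intros. destruct a; simpl prec. ring. rewrite !csum_sum.
 rewrite (sum_n_m_Chasles f 0 a k) by lia. reflexivity. Qed.

Definition cnt (c : nat -> nat) (N k : nat) : nat := length (filter (fun i => c i <=? k) (seq 1 N)).

Lemma filter_count : forall (p : nat -> bool) j n s, (forall i, (s <= i < s + n)%nat -> p i = (i <=? j)) ->
  length (filter p (seq s n)) = (Nat.min (s + n) (j + 1) - s)%nat.
Proof. intros p j n. induction n; intros s H.
 - simpl. lia.
 - simpl. rewrite (H s) by lia. destruct (Nat.leb_spec s j).
   + simpl. rewrite IHn. lia. intros; apply H; lia.
   + rewrite IHn. lia. intros; apply H; lia. Qed.

Lemma cmono : forall (c : nat -> nat) N, (forall k, (k < N)%nat -> (c k < c (S k))%nat) ->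
  forall i i', (i < i' <= N)%nat -> (c i < c i')%nat.
Proof. intros c N H i i' [H1 H2]. induction H1. apply H; lia.
 assert (c m < c (S m))%nat by (apply H; lia). assert (c i < c m)%nat by (apply IHle; lia). lia. Qed.

Lemma cnt_spec : forall c N j k, (forall k, (k < N)%nat -> (c k < c (S k))%nat) ->
  (j <= N)%nat -> (c j <= k)%nat -> ((j < N)%nat -> (k < c (S j))%nat) -> cnt c N k = j.
Proof. intros c N j k Hm Hj H1 H2. unfold cnt. rewrite (filter_count _ j). lia.
 intros i Hi. destruct (Nat.leb_spec i j).
 - apply Nat.leb_le. destruct (Nat.eq_dec i j). subst; auto.
   assert (c i < c j)%nat by (apply (cmono c N Hm); lia). lia.
 - apply Nat.leb_gt. assert (j < N)%nat by lia. specialize (H2 H0).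
   destruct (Nat.eq_dec i (S j)). subst; lia.
   assert (c (S j) < c i)%nat by (apply (cmono c N Hm); lia). lia. Qed.

Lemma cnt_le : forall c N k, (cnt c N k <= N)%nat.
Proof. intros. unfold cnt. rewrite <- (length_seq N 1) at 2. apply filter_length_le. Qed.

Definition piece (c : nat -> nat) (N k : nat) : nat :=
  let j := cnt c N k in if j =? N then (2 * N)%nat else if S k =? c (S j) then (2 * j + 1)%nat else (2 * j)%nat.

Lemma piece_le : forall c N k, (piece c N k <= 2 * N)%nat.
Proof. intros. unfold piece. pose proof (cnt_le c N k).
 destruct (Nat.eqb_spec (cnt c N k) N). lia. destruct (S k =? c (S (cnt c N k))); lia. Qed.

Lemma piece_block : forall c N j k, (forall k, (k < N)%nat -> (c k < c (S k))%nat) ->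
  (j < N)%nat -> (c j <= k)%nat -> (k < c (S j))%nat ->
  piece c N k = if S k =? c (S j) then (2 * j + 1)%nat else (2 * j)%nat.
Proof. intros. unfold piece. rewrite (cnt_spec c N j k) by (auto; lia).
 destruct (Nat.eqb_spec j N). lia. reflexivity. Qed.

Lemma piece_tail : forall c N k, (forall k, (k < N)%nat -> (c k < c (S k))%nat) ->
  (c N <= k)%nat -> piece c N k = (2 * N)%nat.
Proof. intros. unfold piece. rewrite (cnt_spec c N N k) by (auto; lia). rewrite Nat.eqb_refl. reflexivity. Qed.

Lemma csum_zero : forall a b, csum a b (fun _ => RtoC 0) = RtoC 0.
Proof. intros. rewrite csum_sum. exact (@sum_n_m_const_zero C_AbelianMonoid a b). Qed.

Lemma csum_select : forall n p (x : C), (p <= n)%nat -> csum 0 n (fun i => if i =? p then x else RtoC 0) = x.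
Proof. intros n p x. induction n; intros H.
 - assert (p = 0)%nat by lia. subst. rewrite csum_sum, sum_n_n. reflexivity.
 - rewrite csum_sum, sum_n_Sm by lia. rewrite <- csum_sum. destruct (Nat.eqb_spec (S n) p).
   + subst. rewrite (csum_ext 0 n _ (fun _ => RtoC 0)).
     2:{ intros. destruct (Nat.eqb_spec j (S n)). lia. reflexivity. }
     rewrite csum_zero. change (plus (@zero C_AbelianMonoid) x = x). apply plus_zero_l.
   + rewrite IHn by lia. change (plus x (RtoC 0) = x). apply (@plus_zero_r C_AbelianMonoid). Qed.

Section Main.
Variable alpha : nat -> C.
Variable eps : R.
Variable N : nat.
Variable c : nat -> nat.
Hypothesis Halpha : ell2 alpha.
Hypothesis Heps : 0 < eps.
Hypothesis Hc0 : c 0%nat = 0%nat.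
Hypothesis Hstep : forall k, (k < N)%nat ->
       (c k < c (S k))%nat /\ L_I alpha (c k) (c (S k) - 1) > eps /\
       forall t, (c k < t < c (S k))%nat -> ~ (L_I alpha (c k) (t - 1) > eps).
Hypothesis Htail : forall t, (c N < t)%nat -> ~ (L_I alpha (c N) (t - 1) > eps).

Lemma Hmono : forall k, (k < N)%nat -> (c k < c (S k))%nat.
Proof. intros. apply Hstep; auto. Qed.

Lemma HLtail : forall M, (c N <= M)%nat -> ~ (L_I alpha (c N) M > eps).
Proof. intros. replace M with (S M - 1)%nat by lia. apply Htail. lia. Qed.

Definition phi (i : nat) (f : nat -> C) : C :=
  if i =? 2 * N then (prec f (c N) + minf alpha (c N) f)%C
  else if Nat.odd i then prec f (c (S (Nat.div2 i)))
  else (prec f (c (Nat.div2 i)) + mfin alpha (c (Nat.div2 i)) (c (S (Nat.div2 i)) - 2) f)%C.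

Definition vv (i k : nat) : C := if piece c N k =? i then alpha k else RtoC 0.

Definition Pop (f : nat -> C) (k : nat) : C :=
  csum 0 (pred (pred (2 * N + 2))) (fun i => if Nat.ltb i (pred (2 * N + 2)) then Cmult (phi i f) (vv i k) else RtoC 0).

Lemma Pop_eq : forall f k, Pop f k = (phi (piece c N k) f * alpha k)%C.
Proof. intros. unfold Pop. replace (pred (pred (2 * N + 2))) with (2 * N)%nat by lia.
 replace (pred (2 * N + 2)) with (S (2 * N)) by lia.
 rewrite (csum_ext 0 (2 * N) _ (fun i => if i =? piece c N k then (phi (piece c N k) f * alpha k)%C else RtoC 0)).
 apply csum_select. apply piece_le.
 intros i Hi. assert (Nat.ltb i (S (2 * N)) = true) by (apply Nat.ltb_lt; lia). rewrite H.
 unfold vv. destruct (Nat.eqb_spec (piece c N k) i); destruct (Nat.eqb_spec i (piece c N k)); subst; try lia.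
 reflexivity. ring. Qed.

Lemma gk : forall f k, (R_op alpha f k - Pop f k)%C = (alpha k * (csum 0 k f - phi (piece c N k) f))%C.
Proof. intros. rewrite Pop_eq. unfold R_op. ring. Qed.

Lemma g_block : forall f j k, (j < N)%nat -> (c j <= k)%nat -> (S k < c (S j))%nat ->
  (R_op alpha f k - Pop f k)%C = (alpha k * (csum (c j) k f - mfin alpha (c j) (c (S j) - 2) f))%C.
Proof. intros. rewrite gk. rewrite (piece_block c N j k Hmono) by (auto; lia).
 destruct (Nat.eqb_spec (S k) (c (S j))). lia.
 unfold phi. destruct (Nat.eqb_spec (2 * j) (2 * N)). lia. rewrite Nat.odd_even, Nat.div2_double.
 rewrite (prec_split f (c j) k) by lia. ring. Qed.

Lemma g_single : forall f j k, (j < N)%nat -> (c j <= k)%nat -> (S k = c (S j)) ->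
  (R_op alpha f k - Pop f k)%C = RtoC 0.
Proof. intros. rewrite gk. rewrite (piece_block c N j k Hmono) by (auto; lia).
 rewrite H1, Nat.eqb_refl. unfold phi. destruct (Nat.eqb_spec (2 * j + 1) (2 * N)). lia.
 rewrite Nat.odd_odd. replace (2 * j + 1)%nat with (S (2 * j)) by lia. rewrite Nat.div2_succ_double.
 rewrite <- H1. simpl prec. ring. Qed.

Lemma g_tail : forall f k, (c N <= k)%nat ->
  (R_op alpha f k - Pop f k)%C = (alpha k * (csum (c N) k f - minf alpha (c N) f))%C.
Proof. intros. rewrite gk. rewrite (piece_tail c N k Hmono) by auto. unfold phi. rewrite Nat.eqb_refl.
 rewrite (prec_split f (c N) k) by lia. ring. Qed.

Lemma phi_plus : forall f g, ell2 f -> ell2 g -> forall i,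
  phi i (fun j => (f j + g j)%C) = (phi i f + phi i g)%C.
Proof. intros f g Hf Hg i. unfold phi.
 destruct (i =? 2 * N).
 - destruct (TLconv alpha f eps (c N) Halpha Hf Heps HLtail) as [H1 H2].
   destruct (TLconv alpha g eps (c N) Halpha Hg Heps HLtail) as [H3 H4].
   rewrite prec_plus, (minf_plus alpha (c N) f g H1 H2 H3 H4). ring.
 - destruct (Nat.odd i). apply prec_plus. rewrite prec_plus, mfin_plus. ring. Qed.

Lemma phi_scal : forall (z : C) f, ell2 f -> forall i,
  phi i (fun j => (z * f j)%C) = (z * phi i f)%C.
Proof. intros z f Hf i. unfold phi.
 destruct (i =? 2 * N).
 - destruct (TLconv alpha f eps (c N) Halpha Hf Heps HLtail) as [H1 H2].
   rewrite prec_scal, (minf_scal alpha (c N) z f H1 H2). ring.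
 - destruct (Nat.odd i). apply prec_scal. rewrite prec_scal, mfin_scal. ring. Qed.

Lemma ell2_bound : forall (h : nat -> C) K, (forall k, Cmod (h k) ^ 2 <= K * w alpha k) -> ell2 h.
Proof. intros h K H. unfold ell2.
 apply (@ex_series_le R_AbsRing R_CompleteNormedModule _ (fun k => K * w alpha k)).
 - intros n. change (norm ?x) with (Rabs x). rewrite Rabs_right. apply H. apply Rle_ge, pow2_ge_0.
 - apply (ex_series_scal_l K (fun k => w alpha k)). exact Halpha. Qed.

Lemma Pop_linear : linear_l2 Pop.
Proof. split; [|split].
 - intros f Hf. apply (ell2_bound _ (ssum (fun i => Cmod (phi i f) ^ 2) 0 (2 * N))).
   intros k. rewrite Pop_eq, Cmod_mult_sq. fold (w alpha k). apply Rmult_le_compat_r. apply w_nonneg.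
   apply (ssum_term_le (fun i => Cmod (phi i f) ^ 2)). intros; apply pow2_ge_0. split. lia. apply piece_le.
 - intros f g Hf Hg k. rewrite !Pop_eq. rewrite phi_plus by auto. ring.
 - intros z f Hf k. rewrite !Pop_eq. rewrite phi_scal by auto. ring. Qed.

Lemma Pop_rank : rank_le Pop (pred (2 * N + 2)).
Proof. exists vv. split.
 - intros i Hi. apply (ell2_bound _ 1). intros k. unfold vv. destruct (piece c N k =? i).
   fold (w alpha k). lra. rewrite Cmod_0. pose proof (w_nonneg alpha k). simpl. lra.
 - intros f Hf. exists (fun i => phi i f). intros k. reflexivity. Qed.

Definition rp (u : nat -> R) (n : nat) : R := match n with O => 0 | S n' => ssum u 0 n' end.

Lemma rp_split : forall u a b, (a <= S b)%nat -> rp u (S b) = rp u a + ssum u a b.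
Proof. intros. destruct a; simpl rp. ring. apply ssum_chasles; lia. Qed.

Section F.
Variable f : nat -> C.
Hypothesis Hf : ell2 f.
Let G k := Cmod (R_op alpha f k - Pop f k)%C ^ 2.
Let F k := Cmod (f k) ^ 2.
Let K := eps ^ 2 / 2.

Lemma K_nonneg : 0 <= K.
Proof. unfold K. nra. Qed.

Lemma block_bound : forall j, (j < N)%nat -> ssum G (c j) (c (S j) - 1) <= K * ssum F (c j) (c (S j) - 1).
Proof. intros j Hj. destruct (Hstep j Hj) as [Hlt [_ Hin]].
 pose proof K_nonneg.
 destruct (Nat.eq_dec (c (S j)) (S (c j))) as [He|He].
 - rewrite He. replace (S (c j) - 1)%nat with (c j) by lia. rewrite !ssum_one. unfold G.
   rewrite (g_single f j (c j)) by (auto; lia). rewrite Cmod_0. unfold F. pose proof (pow2_ge_0 (Cmod (f (c j)))). simpl. nra.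
 - set (b' := (c (S j) - 2)%nat).
   replace (c (S j) - 1)%nat with (S b') by (unfold b'; lia).
   rewrite ssum_Sr by (unfold b'; lia). rewrite (ssum_Sr F) by (unfold b'; lia).
   assert (HG0 : G (S b') = 0).
   { unfold G. rewrite (g_single f j (S b')) by (auto; unfold b'; lia). rewrite Cmod_0. simpl. ring. }
   rewrite HG0.
   rewrite (ssum_ext G (fun k => Cmod (alpha k * (csum (c j) k f - mfin alpha (c j) b' f)) ^ 2)).
   2:{ intros k Hk. unfold G. rewrite (g_block f j k) by (auto; unfold b' in Hk; lia). reflexivity. }
   assert (HL' : ~ L_I alpha (c j) b' > eps).
   { replace b' with (S b' - 1)%nat by lia. apply Hin. unfold b'; lia. }
   pose proof (FL alpha eps (c j) b' f Heps HL') as H0.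
   assert (H1 : 0 <= F (S b')) by apply pow2_ge_0.
   pose proof (Rmult_le_pos K (F (S b')) H H1). fold K in H0. change (ssum (fun k : nat => Cmod (f k) ^ 2) (c j) b') with (ssum F (c j) b') in H0. lra. Qed.

Lemma prefix_bound : forall j, (j <= N)%nat -> rp G (c j) <= K * rp F (c j).
Proof. induction j; intros Hj.
 - rewrite Hc0. simpl. lra.
 - assert (Hlt : (c j < c (S j))%nat) by (apply Hmono; lia).
   replace (c (S j)) with (S (c (S j) - 1)) by lia.
   rewrite (rp_split G (c j)) by lia. rewrite (rp_split F (c j)) by lia.
   pose proof (block_bound j ltac:(lia)). pose proof (IHj ltac:(lia)). nra. Qed.

Lemma rp_Ft : forall a, rp F a + Ft f a = Series F.
Proof. intros. destruct a.
 - simpl. unfold Ft. rewrite Rplus_0_l. apply Series_ext. intros. reflexivity.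
 - rewrite (Series_incr_n F (S a)) by (auto; lia). simpl pred. rewrite <- sum_n_Reals. unfold Ft. reflexivity. Qed.

Lemma Fnonneg : forall k, 0 <= F k.
Proof. intros. apply pow2_ge_0. Qed.
Lemma Gnonneg : forall k, 0 <= G k.
Proof. intros. apply pow2_ge_0. Qed.

Lemma all_bound : forall n, sum_n G n <= K * Series F.
Proof. intros n. change (sum_n G n) with (rp G (S n)).
 pose proof K_nonneg. pose proof (rp_Ft (c N)). pose proof (Ft_nonneg f (c N) Hf).
 pose proof (prefix_bound N (le_n _)).
 destruct (le_lt_dec (S n) (c N)).
 - destruct (c N) as [|m] eqn:E. lia.
   rewrite (rp_split G (S n) m) in H2 by lia.
   assert (0 <= ssum G (S n) m) by (apply ssum_nonneg; intros; apply Gnonneg). nra.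
 - rewrite (rp_split G (c N) n) by lia.
   rewrite (ssum_ext G (fun k => Cmod (alpha k * (csum (c N) k f - minf alpha (c N) f)) ^ 2)).
   2:{ intros k Hk. unfold G. rewrite g_tail by lia. reflexivity. }
   pose proof (TL alpha f eps (c N) Halpha Hf Heps HLtail n). fold K in H3. nra. Qed.

Lemma opbound_f : norm2 f <= 1 -> norm2 (op_sub (R_op alpha) Pop f) <= eps / sqrt 2.
Proof. intros Hn. unfold norm2 in *. apply sqrt_le1 in Hn.
 assert (Series G <= K * Series F) by (apply series_le_bound; [apply Gnonneg | apply all_bound]).
 assert (Series G <= K). { fold F in Hn. pose proof K_nonneg. nra. }
 replace (eps / sqrt 2) with (sqrt K).
 apply sqrt_le_1_alt. unfold op_sub. fold G. exact H0.
 unfold K. rewrite sqrt_div_alt by lra. rewrite sqrt_pow2 by lra. reflexivity. Qed.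
End F.

Lemma zero_ell2 : ell2 (fun _ => RtoC 0).
Proof. apply (ell2_bound _ 0). intros. rewrite Cmod_0. simpl. lra. Qed.

Lemma opnorm_bound : exists r, opnorm (op_sub (R_op alpha) Pop) = Finite r /\ r <= eps / sqrt 2.
Proof. unfold opnorm.
 match goal with |- context [Lub_Rbar ?E] => set (EE := E) end.
 destruct (Lub_Rbar_correct EE) as [Hub Hleast].
 assert (H1 : Rbar_le (Lub_Rbar EE) (eps / sqrt 2)).
 { apply Hleast. intros x [g [Hg [Hn Hx]]]. subst x. simpl. apply opbound_f; auto. }
 assert (H2 : Rbar_le (norm2 (op_sub (R_op alpha) Pop (fun _ => RtoC 0))) (Lub_Rbar EE)).
 { apply Hub. exists (fun _ => RtoC 0). split. apply zero_ell2. split; [|reflexivity].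
   unfold norm2. rewrite <- sqrt_1. apply sqrt_le_1_alt.
   apply series_le_bound. intros; apply pow2_ge_0. intros n. unfold sum_n.
   change (sum_n_m (fun k => Cmod (RtoC 0) ^ 2) 0 n) with (ssum (fun k => Cmod (RtoC 0) ^ 2) 0 n).
   rewrite (ssum_ext _ (fun _ => 0)). rewrite ssum_zero. lra. intros. rewrite Cmod_0. simpl; ring. }
 destruct (Lub_Rbar EE) as [r| |]; simpl in H1, H2; try contradiction.
 exists r. split; auto. Qed.

End Main.


Theorem lemma4p2 (alpha : nat -> C) (eps : R) (N : nat) :
  ell2 alpha -> 0 < eps -> epsL_finite_length alpha eps N ->
  Rbar_le (approx_num (R_op alpha) (2 * N + 2)) (Finite (eps / sqrt 2)).
Proof. intros Ha He [c [Hc0 [Hstep Htail]]].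
 destruct (opnorm_bound alpha eps N c Ha He Hc0 Hstep Htail) as [r [Hop Hr]].
 unfold approx_num.
 match goal with |- context [Glb_Rbar ?E] => destruct (Glb_Rbar_correct E) as [Hlb _] end.
 eapply Rbar_le_trans. apply Hlb. exists (Pop alpha N c). split.
 apply (Pop_linear alpha eps N c Ha He Hc0 Htail). split.
 apply (Pop_rank alpha N c Ha). exact Hop. simpl. exact Hr. Qed.
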